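(* Let $\mathcal X$ be the Hawaiian earring with base point $0$. For a loop $h:[0,1]\to\mathcal X$ with $h(0)=h(1)=0$ and $n\in\mathbb N$, let $h^{\{n\}}:[0,1]\to C_n$ be defined by $h^{\{n\}}(x)=h(x)$ if $h(x)\in C_n$ and $h^{\{n\}}(x)=0$ otherwise, and let $A(h)=\{n\in\mathbb N: h^{\{n\}}:[0,1]\to C_n\text{ is not null-homotopic}\}$. Then: (i) if two such loops $f,g$ are homotopic (rel endpoints) in $\mathcal X$, then $A(f)=A(g)$; (ii) $|h^{-1}(0)|\ge|A(h)|$; (iii) if $[f]\in\mathfrak P^\omega(\mathcal X,0)$ then $A(f)$ is finite.
   Context: For $n\in\mathbb N=\{1,2,\dots\}$, $C_n=\{(x,y)\in\mathbb R^2: x^2+(y-\tfrac1n)^2=\tfrac1{n^2}\}$ and the Hawaiian earring is $\mathcal X=\bigcup_{n\in\mathbb N}C_n\subseteq\mathbb R^2$; all $C_n$ pass through $0$. An $\omega$-loop at $0$ is a continuous $k:[0,1]\to\mathcal X$ with $k(0)=k(1)=0$ and $|k^{-1}(x)|$ finite for every $x\in\mathcal X$; $\mathfrak P^\omega(\mathcal X,0)$ is the subgroup of $\pi_1(\mathcal X,0)$ generated by homotopy classes (rel endpoints) of $\omega$-loops at $0$ (it coincides with the set of such classes). *)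

(* Defs.v *)
From Stdlib Require Import Reals Lra List.
Open Scope R_scope.

Definition pt := (R * R)%type.
Definition origin : pt := (0, 0).

Definition dist2 (p q : pt) : R :=
  sqrt ((fst p - fst q)^2 + (snd p - snd q)^2).

Definition unit_I (t : R) : Prop := 0 <= t <= 1.

Definition in_C (n : nat) (p : pt) : Prop :=
  (fst p)^2 + (snd p - / INR n)^2 = (/ INR n)^2.

Definition in_X (p : pt) : Prop := exists n : nat, (1 <= n)%nat /\ in_C n p.

Definition path_cont (h : R -> pt) : Prop :=
  forall t, unit_I t -> forall eps, 0 < eps -> exists delta, 0 < delta /\
    forall s, unit_I s -> Rabs (s - t) < delta -> dist2 (h s) (h t) < eps.

Definition sq_cont (H : R -> R -> pt) : Prop :=
  forall s t, unit_I s -> unit_I t -> forall eps, 0 < eps ->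
    exists delta, 0 < delta /\
    forall s' t', unit_I s' -> unit_I t' -> Rabs (s' - s) < delta ->
      Rabs (t' - t) < delta -> dist2 (H s' t') (H s t) < eps.

Definition loop_in (S : pt -> Prop) (h : R -> pt) : Prop :=
  path_cont h /\ (forall t, unit_I t -> S (h t)) /\ h 0 = origin /\ h 1 = origin.

Definition homotopic_rel (S : pt -> Prop) (f g : R -> pt) : Prop :=
  exists H : R -> R -> pt, sq_cont H /\
    (forall s t, unit_I s -> unit_I t -> S (H s t)) /\
    (forall s, unit_I s -> H s 0 = f s) /\
    (forall s, unit_I s -> H s 1 = g s) /\
    (forall t, unit_I t -> H 0 t = origin /\ H 1 t = origin).

Definition const_loop : R -> pt := fun _ => origin.

Definition null_homotopic_in (S : pt -> Prop) (h : R -> pt) : Prop :=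
  homotopic_rel S h const_loop.

Definition in_C_dec (n : nat) (p : pt) : {in_C n p} + {~ in_C n p} :=
  Req_EM_T _ _.

Definition restr (n : nat) (h : R -> pt) : R -> pt :=
  fun x => if in_C_dec n (h x) then h x else origin.

Definition A_set (h : R -> pt) (n : nat) : Prop :=
  (1 <= n)%nat /\ ~ null_homotopic_in (in_C n) (restr n h).

Definition omega_loop (k : R -> pt) : Prop :=
  loop_in in_X k /\
  forall x, in_X x -> exists l : list R, forall t, unit_I t -> k t = x -> In t l.

Definition concat (f g : R -> pt) : R -> pt :=
  fun t => if Rle_dec t (1/2) then f (2 * t) else g (2 * t - 1).
Definition rev_path (f : R -> pt) : R -> pt := fun t => f (1 - t).

(* loops representing elements of the subgroup generated by classes of
   omega-loops: finite products of omega-loops and their inverses *)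
Inductive gen_omega : (R -> pt) -> Prop :=
| gen_const : gen_omega const_loop
| gen_cons : forall k g, omega_loop k -> gen_omega g -> gen_omega (concat k g)
| gen_cons_inv : forall k g, omega_loop k -> gen_omega g ->
    gen_omega (concat (rev_path k) g).

Definition in_P_omega (f : R -> pt) : Prop :=
  exists g, gen_omega g /\ homotopic_rel in_X f g.

(* Main.v *)
Require Import Defs.
From Stdlib Require Import Reals Lra Lia List Classical ClassicalEpsilon.
Open Scope R_scope.

Lemma dist2_refl p : dist2 p p = 0.
Proof. unfold dist2. replace ((fst p - fst p) ^ 2 + (snd p - snd p) ^ 2) with 0 by ring. apply sqrt_0. Qed.

Lemma dist2_coord q p d : dist2 q p < d -> Rabs (fst q - fst p) < d /\ Rabs (snd q - snd p) < d.
Proof.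
  unfold dist2. intros H. split; eapply Rle_lt_trans; try exact H;
  rewrite <- sqrt_Rsqr_abs; apply sqrt_le_1_alt; unfold Rsqr;
  generalize (fst q - fst p) (snd q - snd p); intros a b; nra.
Qed.

Lemma in_C_origin n : in_C n origin.
Proof. unfold in_C, origin; cbn [fst snd]. ring. Qed.

Lemma origin_in_X : in_X origin.
Proof. exists 1%nat. split. lia. apply in_C_origin. Qed.

Lemma inC_eq n x y : (1 <= n)%nat -> in_C n (x,y) -> INR n * (x^2 + y^2) = 2*y.
Proof.
  intros Hn H. unfold in_C in H; cbn [fst snd] in H.
  assert (HN: 0 < INR n) by (apply lt_0_INR; lia).
  set (c := / INR n) in *. assert (Hc: INR n * c = 1) by (unfold c; field; lra).
  assert (H1: x^2+y^2 = 2*c*y) by nra.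
  rewrite H1. replace (INR n * (2*c*y)) with (2*y*(INR n * c)) by ring. rewrite Hc. ring.
Qed.

Lemma circle_sep m p : (1<=m)%nat -> in_C m p -> p <> origin ->
  exists d, 0 < d /\ forall k q, (1<=k)%nat -> in_C k q -> dist2 q p < d -> k = m /\ q <> origin.
Proof.
  intros Hm Hp Hne. destruct p as [x0 y0].
  pose proof (inC_eq m x0 y0 Hm Hp) as E0. set (M := INR m) in *.
  assert (HM: 0 < M) by (apply lt_0_INR; lia).
  assert (Hy0: 0 < y0).
  { destruct (Rtotal_order y0 0) as [h|[h|h]]; [ nra | | lra].
    exfalso; apply Hne. subst y0. assert (x0*x0 = 0) by nra.
    apply Rmult_integral in H; destruct H; subst; reflexivity. }
  set (W := 2 + M*(2*Rabs x0 + 2*Rabs y0 + 2)).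
  assert (HW: 0 < W) by (unfold W; pose proof (Rabs_pos x0); pose proof (Rabs_pos y0); nra).
  assert (Hq0: 0 < y0^2/(8*W)) by (apply Rdiv_lt_0_compat; nra).
  set (d := Rmin 1 (Rmin (y0/2) (y0^2/(8*W)))).
  assert (d1: d <= 1) by apply Rmin_l.
  assert (d2: d <= y0/2) by (eapply Rle_trans; [apply Rmin_r| apply Rmin_l]).
  assert (d3: d <= y0^2/(8*W)) by (eapply Rle_trans; [apply Rmin_r| apply Rmin_r]).
  assert (dpos: 0 < d) by (unfold d; repeat apply Rmin_glb_lt; lra).
  assert (dW: d*W <= y0^2/8).
  { assert (y0^2/(8*W)*W = y0^2/8) by (field; lra). nra. }
  exists d. split; [exact dpos|].
  intros k [x y] Hk Hq Hd.
  apply dist2_coord in Hd; cbn [fst snd] in Hd. destruct Hd as [Hx Hy].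
  pose proof (inC_eq k x y Hk Hq) as E. set (K := INR k) in *.
  pose proof (Rabs_def2 _ _ Hy) as [Hy1 Hy2].
  assert (Hyy: y0/2 <= y) by lra.
  split; [| intro Heq; unfold origin in Heq; injection Heq; intros; lra].
  set (S := x^2+y^2) in *.
  set (T := S - (x0^2+y0^2)).
  assert (HT: Rabs T <= d*(2 + 2*Rabs x0 + 2*Rabs y0)).
  { set (ux := x - x0) in *. set (uy := y - y0) in *.
    assert (ET: T = ux*ux + 2*x0*ux + uy*uy + 2*y0*uy) by (unfold T, S, ux, uy; ring).
    rewrite ET.
    eapply Rle_trans. apply Rabs_triang.
    eapply Rle_trans. apply Rplus_le_compat_r. apply Rabs_triang.
    eapply Rle_trans. apply Rplus_le_compat_r. apply Rplus_le_compat_r. apply Rabs_triang.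
    rewrite !Rabs_mult. rewrite (Rabs_pos_eq 2) by lra.
    pose proof (Rabs_pos ux); pose proof (Rabs_pos uy);
    pose proof (Rabs_pos x0); pose proof (Rabs_pos y0). nra. }
  assert (HK: (K - M)*S = 2*(y - y0) - M*T).
  { replace ((K-M)*S) with (K*S - M*S) by ring. replace (M*T) with (M*S - M*(x0^2+y0^2)) by (unfold T; ring). rewrite E, E0; ring. }
  assert (HS: y0^2/4 <= S) by (unfold S; pose proof (pow2_ge_0 x); assert (y0*y0 <= 4*(y*y)) by nra; simpl; nra).
  assert (HB: Rabs (K - M) * S <= y0^2/8).
  { rewrite <- (Rabs_pos_eq S) by (pose proof (pow2_ge_0 y0); lra). rewrite <- Rabs_mult, HK.
    unfold Rminus at 1. eapply Rle_trans. apply Rabs_triang.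
    rewrite Rabs_Ropp, !Rabs_mult, (Rabs_pos_eq 2), (Rabs_pos_eq M) by lra.
    pose proof (Rabs_pos T).
    assert (M*Rabs T <= M*(d*(2 + 2*Rabs x0 + 2*Rabs y0))) by (apply Rmult_le_compat_l; lra).
    unfold W in dW. assert (d*(2 + M*(2*Rabs x0 + 2*Rabs y0 + 2)) = 2*d + M*(d*(2 + 2*Rabs x0 + 2*Rabs y0))) by ring. lra. }
  assert (HL: Rabs (K - M) < 1) by (pose proof (Rabs_pos (K-M)); nra).
  destruct (Nat.lt_total k m) as [h|[h|h]]; auto; exfalso.
  - assert (INR (Datatypes.S k) <= M) by (apply le_INR; lia). rewrite S_INR in H.
    pose proof (Rle_abs (- (K - M))); rewrite Rabs_Ropp in *. unfold K in *. lra.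
  - assert (INR (Datatypes.S m) <= K) by (apply le_INR; lia). rewrite S_INR in H.
    pose proof (Rle_abs (K - M)). unfold M in *. lra.
Qed.

Lemma circ_uniq n m p : (1<=n)%nat -> (1<=m)%nat -> in_C n p -> in_C m p -> p <> origin -> n = m.
Proof.
  intros Hn Hm Hpn Hpm Hne. destruct (circle_sep m p Hm Hpm Hne) as [d [Hd Hc]].
  apply (Hc n p Hn Hpn). rewrite dist2_refl. exact Hd.
Qed.

Definition rn (n : nat) (p : pt) : pt := if in_C_dec n p then p else origin.

Lemma restr_rn n h x : restr n h x = rn n (h x).
Proof. reflexivity. Qed.

Lemma rn_in n p : in_C n (rn n p).
Proof. unfold rn. destruct (in_C_dec n p); auto. apply in_C_origin. Qed.

Lemma rn_origin n : rn n origin = origin.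
Proof. unfold rn. destruct (in_C_dec n origin); auto. Qed.

Lemma rn_cont n p : (1 <= n)%nat -> in_X p -> forall eps, 0 < eps -> exists d, 0 < d /\
  forall q, in_X q -> dist2 q p < d -> dist2 (rn n q) (rn n p) < eps.
Proof.
  intros Hn Hp eps He.
  destruct (classic (p = origin)) as [E|E].
  - subst p. exists eps. split; auto. intros q _ Hq. rewrite rn_origin.
    unfold rn. destruct (in_C_dec n q); auto.
    rewrite dist2_refl; auto.
  - destruct Hp as [m [Hm Hpm]].
    destruct (circle_sep m p Hm Hpm E) as [d [Hd Hc]].
    exists (Rmin d eps). split. apply Rmin_glb_lt; auto.
    intros q [k [Hk Hqk]] Hq.
    assert (Hq1: dist2 q p < d) by (eapply Rlt_le_trans; [exact Hq| apply Rmin_l]).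
    destruct (Hc k q Hk Hqk Hq1) as [Ekm Hq0]. subst k.
    unfold rn. destruct (in_C_dec n q) as [a|a]; destruct (in_C_dec n p) as [b|b].
    + eapply Rlt_le_trans; [exact Hq| apply Rmin_r].
    + exfalso. apply b. assert (n = m) by (eapply circ_uniq; eauto). subst; auto.
    + exfalso. apply a. assert (n = m) by (eapply circ_uniq; eauto). subst; auto.
    + rewrite dist2_refl; auto.
Qed.

Ltac rmin_split H :=
  let H1 := fresh H in let H2 := fresh H in
  assert (H1 := Rlt_le_trans _ _ _ H (Rmin_l _ _));
  assert (H2 := Rlt_le_trans _ _ _ H (Rmin_r _ _)); clear H.

Lemma sq_cont_swap H : sq_cont H -> sq_cont (fun s t => H t s).
Proof.
  intros HH s t Is It eps He. destruct (HH t s It Is eps He) as [d [Hd Hc]].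
  exists d. split; [exact Hd|]. intros s' t' Is' It' Hs Ht. apply Hc; auto.
Qed.

Lemma sq_cont_rev H : sq_cont H -> sq_cont (fun s t => H (1 - s) t).
Proof.
  intros HH s t Is It eps He.
  destruct (HH (1 - s) t ltac:(unfold unit_I in *; lra) It eps He) as [d [Hd Hc]].
  exists d. split; [exact Hd|]. intros s' t' Is' It' Hs Ht. apply Hc; auto.
  unfold unit_I in *; lra.
  replace (1 - s' - (1 - s)) with (- (s' - s)) by ring. rewrite Rabs_Ropp; auto.
Qed.

Lemma sq_cont_const c : sq_cont (fun _ _ => c).
Proof.
  intros s t _ _ eps He. exists 1. split. lra. intros. rewrite dist2_refl. auto.
Qed.

Lemma Rabs_2 u : Rabs (2*u) = 2 * Rabs u.
Proof. rewrite Rabs_mult, (Rabs_pos_eq 2) by lra. reflexivity. Qed.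

Lemma paste A B : sq_cont A -> sq_cont B -> (forall t, unit_I t -> A 1 t = B 0 t) ->
  sq_cont (fun s t => if Rle_dec s (1/2) then A (2*s) t else B (2*s-1) t).
Proof.
  intros HA HB Hm s t Is It eps He.
  destruct (Rlt_le_dec s (1/2)) as [Hs|Hs].
  - destruct (HA (2*s) t ltac:(unfold unit_I in *; lra) It eps He) as [d [Hd Hc]].
    exists (Rmin (d/2) (1/2 - s)). split. apply Rmin_glb_lt; lra.
    intros s' t' Is' It' Hs' Ht'. rmin_split Hs'. rmin_split Ht'.
    pose proof (Rabs_def2 _ _ Hs'1).
    destruct (Rle_dec s' (1/2)); [|lra]. destruct (Rle_dec s (1/2)); [|lra].
    apply Hc. unfold unit_I in *; lra. auto.
    replace (2*s' - 2*s) with (2*(s'-s)) by ring. rewrite Rabs_2. lra. lra.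
  - destruct (Req_dec s (1/2)) as [E|E].
    + subst s. destruct (HA 1 t ltac:(unfold unit_I in *; lra) It eps He) as [d1 [Hd1 Hc1]].
      destruct (HB 0 t ltac:(unfold unit_I in *; lra) It eps He) as [d2 [Hd2 Hc2]].
      exists (Rmin (d1/2) (d2/2)). split. apply Rmin_glb_lt; lra.
      intros s' t' Is' It' Hs' Ht'. rmin_split Hs'. rmin_split Ht'.
      destruct (Rle_dec (1/2) (1/2)); [|lra]. replace (2*(1/2)) with 1 by field.
      destruct (Rle_dec s' (1/2)).
      * apply Hc1. unfold unit_I in *; lra. auto.
        replace (2*s' - 1) with (2*(s'-1/2)) by field. rewrite Rabs_2. lra. lra.
      * rewrite (Hm t It). apply Hc2. unfold unit_I in *; lra. auto.
        replace (2*s' - 1 - 0) with (2*(s'-1/2)) by field. rewrite Rabs_2. lra. lra.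
    + assert (Hs2: 1/2 < s) by lra.
      destruct (HB (2*s-1) t ltac:(unfold unit_I in *; lra) It eps He) as [d [Hd Hc]].
      exists (Rmin (d/2) (s - 1/2)). split. apply Rmin_glb_lt; lra.
      intros s' t' Is' It' Hs' Ht'. rmin_split Hs'. rmin_split Ht'.
      pose proof (Rabs_def2 _ _ Hs'1).
      destruct (Rle_dec s' (1/2)); [lra|]. destruct (Rle_dec s (1/2)); [lra|].
      apply Hc. unfold unit_I in *; lra. auto.
      replace (2*s' - 1 - (2*s - 1)) with (2*(s'-s)) by ring. rewrite Rabs_2. lra. lra.
Qed.

Lemma hom_sym S f g : homotopic_rel S f g -> homotopic_rel S g f.
Proof.
  intros [H [Hc [HS [H0 [H1 He]]]]].
  exists (fun s t => H s (1 - t)). split; [|split; [|split; [|split; [|intros t It; split]]]].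
  - apply (sq_cont_swap (fun s t => H t (1 - s))). apply (sq_cont_rev (fun s t => H t s)). apply sq_cont_swap. exact Hc.
  - intros s t Is It. apply HS; auto. unfold unit_I in *; lra.
  - intros s Is. replace (1 - 0) with 1 by ring. auto.
  - intros s Is. replace (1 - 1) with 0 by ring. auto.
  - apply He. unfold unit_I in *; lra.
  - apply He. unfold unit_I in *; lra.
Qed.

Lemma hom_trans S f g k : homotopic_rel S f g -> homotopic_rel S g k -> homotopic_rel S f k.
Proof.
  intros [H1 [Hc1 [HS1 [H10 [H11 He1]]]]] [H2 [Hc2 [HS2 [H20 [H21 He2]]]]].
  exists (fun s t => if Rle_dec t (1/2) then H1 s (2*t) else H2 s (2*t-1)). split; [|split; [|split; [|split; [|intros t It; split]]]].
  - apply (sq_cont_swap (fun s t => if Rle_dec s (1/2) then H1 t (2*s) else H2 t (2*s-1))).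
    apply (paste (fun s t => H1 t s) (fun s t => H2 t s)); try (apply sq_cont_swap; assumption).
    intros t It. rewrite H11, H20; auto.
  - intros s t Is It. destruct (Rle_dec t (1/2)); [apply HS1|apply HS2]; auto; unfold unit_I in *; lra.
  - intros s Is. destruct (Rle_dec 0 (1/2)); [|lra]. rewrite Rmult_0_r. auto.
  - intros s Is. destruct (Rle_dec 1 (1/2)); [lra|]. replace (2*1-1) with 1 by ring. auto.
  - destruct (Rle_dec t (1/2)); [apply He1|apply He2]; unfold unit_I in *; lra.
  - destruct (Rle_dec t (1/2)); [apply He1|apply He2]; unfold unit_I in *; lra.
Qed.

Lemma hom_rn n f g : (1 <= n)%nat -> homotopic_rel in_X f g ->
  homotopic_rel (in_C n) (restr n f) (restr n g).
Proof.
  intros Hn [H [Hc [HS [H0 [H1 He]]]]].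
  exists (fun s t => rn n (H s t)). split; [|split; [|split; [|split; [|intros t It; split]]]].
  - intros s t Is It eps Heps.
    destruct (rn_cont n (H s t) Hn (HS s t Is It) eps Heps) as [d1 [Hd1 Hr]].
    destruct (Hc s t Is It d1 Hd1) as [d2 [Hd2 Hc2]].
    exists d2. split; [exact Hd2|]. intros s' t' Is' It' A B. apply Hr; auto.
  - intros s t _ _. apply rn_in.
  - intros s Is. rewrite H0; auto.
  - intros s Is. rewrite H1; auto.
  - destruct (He t It) as [E _]. rewrite E. apply rn_origin.
  - destruct (He t It) as [_ E]. rewrite E. apply rn_origin.
Qed.

Lemma part1 f g : homotopic_rel in_X f g -> forall n, A_set f n <-> A_set g n.
Proof.
  intros Hfg n. unfold A_set, null_homotopic_in. split; intros [Hn Hnot]; split; auto;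
    intro Hnull; apply Hnot; pose proof (hom_rn n f g Hn Hfg) as E.
  - eapply hom_trans; eauto.
  - eapply hom_trans; [apply hom_sym; exact E|exact Hnull].
Qed.

Lemma null_const n : null_homotopic_in (in_C n) (restr n const_loop).
Proof.
  exists (fun _ _ => origin). repeat split; intros; try apply in_C_origin; try apply sq_cont_const.
  unfold restr, const_loop. destruct (in_C_dec n origin); auto.
Qed.

Lemma null_rev n k : null_homotopic_in (in_C n) (restr n k) ->
  null_homotopic_in (in_C n) (restr n (rev_path k)).
Proof.
  intros [H [Hc [HS [H0 [H1 He]]]]].
  exists (fun s t => H (1 - s) t). split; [|split; [|split; [|split; [|intros t It; split]]]].
  - apply sq_cont_rev. exact Hc.
  - intros s t Is It. apply HS; auto. unfold unit_I in *; lra.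
  - intros s Is. rewrite H0 by (unfold unit_I in *; lra). reflexivity.
  - intros s Is. rewrite H1 by (unfold unit_I in *; lra). reflexivity.
  - replace (1 - 0) with 1 by ring. apply He; auto.
  - replace (1 - 1) with 0 by ring. apply He; auto.
Qed.

Lemma restr_concat n k g s : restr n (Defs.concat k g) s =
  if Rle_dec s (1/2) then restr n k (2*s) else restr n g (2*s-1).
Proof. unfold restr, Defs.concat. destruct (Rle_dec s (1/2)); reflexivity. Qed.

Lemma null_concat n k g : null_homotopic_in (in_C n) (restr n k) ->
  null_homotopic_in (in_C n) (restr n g) ->
  null_homotopic_in (in_C n) (restr n (Defs.concat k g)).
Proof.
  intros [H1 [Hc1 [HS1 [H10 [H11 He1]]]]] [H2 [Hc2 [HS2 [H20 [H21 He2]]]]].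
  exists (fun s t => if Rle_dec s (1/2) then H1 (2*s) t else H2 (2*s-1) t). split; [|split; [|split; [|split; [|intros t It; split]]]].
  - apply (paste H1 H2); auto. intros t It. destruct (He1 t It), (He2 t It). congruence.
  - intros s t Is It. destruct (Rle_dec s (1/2)); [apply HS1|apply HS2]; auto; unfold unit_I in *; lra.
  - intros s Is. rewrite restr_concat. destruct (Rle_dec s (1/2)).
    + apply H10. unfold unit_I in *; lra.
    + apply H20. unfold unit_I in *; lra.
  - intros s Is. destruct (Rle_dec s (1/2)).
    + rewrite H11 by (unfold unit_I in *; lra). reflexivity.
    + rewrite H21 by (unfold unit_I in *; lra). reflexivity.
  - destruct (Rle_dec 0 (1/2)); [|lra]. rewrite Rmult_0_r. apply He1; auto.
  - destruct (Rle_dec 1 (1/2)); [lra|]. replace (2*1-1) with 1 by ring. apply He2; auto.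
Qed.

Lemma nontriv h n : A_set h n -> exists s, unit_I s /\ in_C n (h s) /\ h s <> origin.
Proof.
  intros [Hn Hnot]. apply NNPP; intro C. apply Hnot.
  exists (fun _ _ => origin).
  split; [|split; [|split; [|split; [|intros t It; split]]]]; intros; auto;
    try apply in_C_origin; try apply sq_cont_const.
  unfold restr. destruct (in_C_dec n (h s)) as [a|a]; auto.
  apply NNPP; intro D. apply C. exists s. auto.
Qed.

Definition Pz (h : R -> pt) (n : nat) (a : R) : Prop :=
  unit_I a /\ h a = origin /\ exists s, a < s /\ s <= 1 /\
    forall u, a < u -> u <= s -> in_C n (h u) /\ h u <> origin.

Lemma zero_point h n : loop_in in_X h -> A_set h n -> exists a, Pz h n a.
Proof.
  intros Hl HA. pose proof HA as [Hn _].
  destruct (nontriv h n HA) as [s [Is [Hsn Hs0]]].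
  destruct Hl as [Hc [HX [Hh0 Hh1]]].
  set (E := fun u => 0 <= u <= s /\ ~ (in_C n (h u) /\ h u <> origin)).
  destruct (completeness E) as [a [Hub Hlub]].
  { exists s. intros u [Hu _]. lra. }
  { exists 0. split. unfold unit_I in Is; lra. intros [_ c]. apply c. exact Hh0. }
  assert (Ha0: 0 <= a).
  { apply Hub. split. unfold unit_I in Is; lra. intros [_ c]. apply c. exact Hh0. }
  assert (Has: a <= s) by (apply Hlub; intros u [Hu _]; lra).
  assert (Hright: forall u, a < u -> u <= s -> in_C n (h u) /\ h u <> origin).
  { intros u H1 H2. apply NNPP; intro D.
    assert (u <= a) by (apply Hub; split; [lra|auto]). lra. }
  assert (Ia: unit_I a) by (unfold unit_I in *; lra).
  assert (Hza: h a = origin).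
  { apply NNPP; intro Hne.
    destruct (HX a Ia) as [m [Hm Ham]].
    destruct (circle_sep m (h a) Hm Ham Hne) as [d [Hd Hsep]].
    destruct (Hc a Ia d Hd) as [del [Hdel Hcont]].
    assert (Hnm: n = m).
    { destruct (Req_dec a s) as [e|e].
      - subst a. eapply circ_uniq; eauto.
      - set (v := Rmin s (a + del/2)).
        assert (v1: v <= s) by apply Rmin_l.
        assert (v2: v <= a + del/2) by apply Rmin_r.
        assert (v3: a < v) by (unfold v; apply Rmin_glb_lt; lra).
        destruct (Hright v v3 v1) as [Hv1 Hv2].
        apply (Hsep n (h v) Hn Hv1). apply Hcont.
        unfold unit_I in *; lra. apply Rabs_def1; lra. }
    subst m.
    assert (Hex: exists u, E u /\ a - del < u).
    { apply NNPP; intro D.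
      assert (a <= a - del). { apply Hlub. intros u Eu.
        destruct (Rle_dec u (a - del)) as [r|r]; auto. exfalso; apply D. exists u. split; auto; lra. }
      lra. }
    destruct Hex as [u [Eu Hu]].
    assert (Hua: u <= a) by (apply Hub; auto).
    destruct Eu as [Eu1 Eu2]. apply Eu2.
    assert (Iu: unit_I u) by (unfold unit_I in *; lra).
    destruct (HX u Iu) as [k [Hk Huk]].
    destruct (Hsep k (h u) Hk Huk) as [ek Hne']. apply Hcont; auto. apply Rabs_def1; lra.
    subst k. auto. }
  exists a. split; [exact Ia|]. split; [exact Hza|].
  exists s. split. destruct (Req_dec a s); [subst; congruence| lra].
  split. unfold unit_I in Is; lra. exact Hright.
Qed.

Lemma Pz_inj h n m a : (1 <= n)%nat -> (1 <= m)%nat -> Pz h n a -> Pz h m a -> n = m.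
Proof.
  intros Hn Hm [_ [_ [s1 [A1 [B1 C1]]]]] [_ [_ [s2 [A2 [B2 C2]]]]].
  set (u := Rmin s1 s2).
  assert (a < u) by (unfold u; apply Rmin_glb_lt; lra).
  destruct (C1 u H (Rmin_l _ _)) as [X1 Y1].
  destruct (C2 u H (Rmin_r _ _)) as [X2 Y2].
  eapply circ_uniq; eauto.
Qed.

Lemma part2 h : loop_in in_X h ->
  exists phi : nat -> R,
    (forall n, A_set h n -> unit_I (phi n) /\ h (phi n) = origin) /\
    (forall n m, A_set h n -> A_set h m -> phi n = phi m -> n = m).
Proof.
  intros Hl.
  exists (fun n => epsilon (inhabits 0) (Pz h n)).
  assert (Hs: forall n, A_set h n -> Pz h n (epsilon (inhabits 0) (Pz h n))).
  { intros n HA. apply epsilon_spec. apply zero_point; auto. }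
  split.
  - intros n HA. destruct (Hs n HA) as [A [B _]]. auto.
  - intros n m Hn Hm E. pose proof (Hs n Hn) as P1. pose proof (Hs m Hm) as P2.
    rewrite E in P1. destruct Hn, Hm. eapply Pz_inj; eauto.
Qed.

Lemma inj_list_bound (l : list R) : forall (P : nat -> Prop) (phi : nat -> R),
  (forall n, P n -> In (phi n) l) -> (forall n m, P n -> P m -> phi n = phi m -> n = m) ->
  exists N, forall n, P n -> (n <= N)%nat.
Proof.
  induction l as [|x l IH]; intros P phi Hin Hinj.
  - exists 0%nat. intros n Pn. destruct (Hin n Pn).
  - destruct (classic (exists n0, P n0 /\ phi n0 = x)) as [[n0 [P0 E0]]|NE].
    + destruct (IH (fun n => P n /\ n <> n0) phi) as [N HN].
      * intros n [Pn Hne]. destruct (Hin n Pn) as [e|e]; auto.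
        exfalso. apply Hne. apply Hinj; auto. congruence.
      * intros n m [Pn _] [Pm _]. apply Hinj; auto.
      * exists (Nat.max N n0). intros n Pn. destruct (Nat.eq_dec n n0).
        -- subst; lia.
        -- specialize (HN n (conj Pn n1)). lia.
    + apply (IH P phi); auto. intros n Pn. destruct (Hin n Pn) as [e|e]; auto.
      exfalso. apply NE. exists n; auto.
Qed.

Lemma omega_bound k : omega_loop k -> exists N, forall n, A_set k n -> (n <= N)%nat.
Proof.
  intros [Hl Hfin]. destruct (part2 k Hl) as [phi [H1 H2]].
  destruct (Hfin origin origin_in_X) as [l Hlst].
  apply (inj_list_bound l (A_set k) phi); auto.
  intros n Hn. destruct (H1 n Hn). apply Hlst; auto.
Qed.

Lemma gen_bound g : gen_omega g -> exists N, forall n, A_set g n -> (n <= N)%nat.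
Proof.
  induction 1 as [| k g Hk Hg [N IH] | k g Hk Hg [N IH]].
  - exists 0%nat. intros n [Hn Hnot]. exfalso. apply Hnot. apply null_const.
  - destruct (omega_bound k Hk) as [M HM]. exists (Nat.max M N).
    intros n HA. destruct (classic (A_set k n)) as [a|a]; [specialize (HM n a); lia|].
    destruct (classic (A_set g n)) as [b|b]; [specialize (IH n b); lia|].
    exfalso. destruct HA as [Hn Hnot]. apply Hnot. apply null_concat.
    + apply NNPP; intro c; apply a; split; auto.
    + apply NNPP; intro c; apply b; split; auto.
  - destruct (omega_bound k Hk) as [M HM]. exists (Nat.max M N).
    intros n HA. destruct (classic (A_set k n)) as [a|a]; [specialize (HM n a); lia|].
    destruct (classic (A_set g n)) as [b|b]; [specialize (IH n b); lia|].
    exfalso. destruct HA as [Hn Hnot]. apply Hnot. apply null_concat.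
    + apply null_rev. apply NNPP; intro c; apply a; split; auto.
    + apply NNPP; intro c; apply b; split; auto.
Qed.

Theorem mainTheorem9 :
  (forall f g : R -> pt, loop_in in_X f -> loop_in in_X g ->
     homotopic_rel in_X f g -> forall n : nat, A_set f n <-> A_set g n) /\
  (forall h : R -> pt, loop_in in_X h ->
     exists phi : nat -> R,
       (forall n, A_set h n -> unit_I (phi n) /\ h (phi n) = origin) /\
       (forall n m, A_set h n -> A_set h m -> phi n = phi m -> n = m)) /\
  (forall f : R -> pt, loop_in in_X f -> in_P_omega f ->
     exists N : nat, forall n, A_set f n -> (n <= N)%nat).
Proof.
  split; [|split].
  - intros f g _ _ H. apply part1; auto.
  - apply part2.
  - intros f _ [g [Hg Hfg]]. destruct (gen_bound g Hg) as [N HN].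
    exists N. intros n Hn. apply HN. apply (part1 f g Hfg n). auto.
Qed.
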